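(* Let $n, m, k, l, s, t, i$ be positive integers with $\min\{m,n\}\geq (t+1)(k-t+1)$, $k\geq l> t\geq 3$, $i+2\leq s \leq i+k-t$ and $t+2 \leq i\leq k$. Then \[\frac{(m-l+t-i)(n-s-k+i)\,S(n,s,i,k)\,S(m,s,s+t-i,l)}{(m-s+1)(n-s+1)\,T(n,s,i,k)\,T(m,s,s+t-i,l)}>1,\] where for positive integers $n,s,i,j$, \[S(n,s,i,j)=s(n-s+1)-i(j-i),\qquad T(n,s,i,j)=i(n-j-s+i+1)+(s-i)(j-i+1).\] *)

(* Defs.v *)
From mathcomp Require Import all_boot all_order all_algebra.
Set Implicit Arguments. Unset Strict Implicit. Unset Printing Implicit Defensive.
Import Order.TTheory GRing.Theory Num.Theory.
Local Open Scope ring_scope.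

Definition Sf (n s i j : nat) : rat :=
  s%:Q * (n%:Q - s%:Q + 1) - i%:Q * (j%:Q - i%:Q).

Definition Tf (n s i j : nat) : rat :=
  i%:Q * (n%:Q - j%:Q - s%:Q + i%:Q + 1) + (s%:Q - i%:Q) * (j%:Q - i%:Q + 1).

(* Main.v *)
Require Import Defs.
From mathcomp Require Import all_boot all_order all_algebra.
From mathcomp Require Import zify.
From mathcomp Require Import ring lra.
Import Order.TTheory GRing.Theory Num.Theory.
Local Open Scope ring_scope.

Lemma posE (x : rat) (p : nat) : x = (1 + p)%N%:R -> 0 < x.
Proof. by move=> ->; rewrite ltr0n add1n. Qed.

Lemma posE2 (x : rat) (p b q : nat) : x = (1 + p)%N%:R + b%:R * q%:R -> 0 < x.
Proof.
move=> ->; apply: ltr_wpDr; first by rewrite mulr_ge0 ?ler0n.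
by rewrite ltr0n add1n.
Qed.

Theorem lemma3p1 (n m k l s t i : nat) :
  (0 < n)%N -> (0 < m)%N -> (0 < k)%N -> (0 < l)%N -> (0 < s)%N ->
  (0 < t)%N -> (0 < i)%N ->
  ((t + 1) * (k - t + 1) <= minn m n)%N ->
  (l <= k)%N -> (t < l)%N -> (3 <= t)%N ->
  (i + 2 <= s)%N -> (s <= i + k - t)%N ->
  (t + 2 <= i)%N -> (i <= k)%N ->
  1 < ((m%:Q - l%:Q + t%:Q - i%:Q) * (n%:Q - s%:Q - k%:Q + i%:Q)
         * Sf n s i k * Sf m s (s + t - i) l)
      / ((m%:Q - s%:Q + 1) * (n%:Q - s%:Q + 1)
         * Tf n s i k * Tf m s (s + t - i) l).
Proof.
move=> n0 m0 k0 l0 s0 t0 i0 HM lk tl t3 is1 s2 ti ik.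
have Hmn : ((t + 1) * (k - t + 1) <= m)%N /\ ((t + 1) * (k - t + 1) <= n)%N.
  by split; apply: (leq_trans HM); rewrite ?geq_minl ?geq_minr.
case: Hmn => Hm' Hn'.
have [f Hn] : exists f, n = ((t + 1) * (k - t + 1) + f)%N.
  by exists (n - (t + 1) * (k - t + 1))%N; rewrite subnKC.
have [g Hm] : exists g, m = ((t + 1) * (k - t + 1) + g)%N.
  by exists (m - (t + 1) * (k - t + 1))%N; rewrite subnKC.
have [a Ht] : exists a, t = (a + 3)%N by exists (t - 3)%N; lia.
have [b [e1 [e2 [c [Hi [Hs Hk]]]]]] : exists b e1 e2 c,
   [/\ i = (t + 2 + b + e1)%N, s = (i + 2 + e1 + e2)%N & k = (i + c + e2)%N].
  exists (i - t - 2 - minn (s - i - 2) (i - t - 2))%N,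
         (minn (s - i - 2) (i - t - 2))%N,
         (s - i - 2 - minn (s - i - 2) (i - t - 2))%N,
         (k - i - (s - i - 2 - minn (s - i - 2) (i - t - 2)))%N.
  split; lia.
have [r Hr] : exists r, k = (l + r)%N by exists (k - l)%N; lia.
have [q Hrq] : exists q, (r + q = 1 + b + e1 + c + e2)%N by exists (l - t - 1)%N; lia.
have Hkt : (k - t = 2 + b + e1 + c + e2)%N by lia.
have Hj : (s + t - i = a + 5 + e1 + e2)%N by lia.
rewrite Hkt in Hn Hm.
rewrite Hj.
have hl : l%:Q = k%:Q - r%:Q by rewrite Hr; ring.
have hq : q%:R = (1 + b + e1 + c + e2)%N%:R - r%:R :> rat by rewrite -Hrq; ring.
idtac.
clear Hr Hkt Hj HM Hm' Hn' lk tl is1 s2 ti ik n0 m0 k0 l0 s0 t0 i0 t3.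
subst n m k s i t.
rewrite /Sf /Tf hl.
rewrite ltr_pdivlMr; last first.
  apply: mulr_gt0; first apply: mulr_gt0; first apply: mulr_gt0.
  - apply: (@posE _ (5 + g + e2 * (3) + e1 * (2) + c * (4) + b * (3) + a * (2 + e2 + e1 + c + b))%N); ring.
  - apply: (@posE _ (5 + f + e2 * (3) + e1 * (2) + c * (4) + b * (3) + a * (2 + e2 + e1 + c + b))%N); ring.
  - apply: (@posE _ (31 + f * (5) + e2 * (13 + e2) + e1 * (17 + f + e2 * (3) + e1 * (2)) + c * (17 + e2 + e1 * (4)) + b * (21 + f + e2 * (2) + e1 * (5) + c * (3) + b * (3)) + a * (16 + f + e2 * (7) + e1 * (9 + e2 + e1) + c * (8 + e1) + b * (10 + e2 + e1 * (2) + c + b) + a * (2 + e2 + e1 + c + b)))%N); ring.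
  - apply: (@posE2 _ (31 + g * (5) + r * (3) + e2 * (21 + g + r + e2 * (3)) + e1 * (17 + g + e2 * (5) + e1 * (2)) + c * (17 + e2 * (3) + e1 * (4)) + b * (12 + e2 + e1 * (2)) + a * (16 + g + r + e2 * (10 + e2) + e1 * (9 + e2 * (2) + e1) + c * (8 + e2 + e1) + b * (7 + e2 + e1) + a * (2 + e2 + e1 + c + b)))%N b q); rewrite hq; ring.
rewrite mul1r -subr_gt0.
apply: (@posE _ (7235 + g * (4266 + g * (510)) + f * (4266 + g * (2085 + g * (229)) + f * (510 + g * (229 + g * (24)))) + r * (10614 + g * (1944) + f * (4043 + g * (738) + f * (379 + g * (69))) + r * (1050 + f * (385 + f * (35)))) + e2 * (19518 + g * (7216 + g * (506)) + f * (9567 + g * (2898 + g * (162)) + f * (927 + g * (238 + g * (9)))) + r * (16856 + g * (2034) + f * (4932 + g * (500) + f * (321 + g * (21))) + r * (1180 + f * (282 + f * (12)))) + e2 * (20364 + g * (4835 + g * (208)) + f * (7713 + g * (1410 + g * (43)) + f * (528 + g * (65 + g))) + r * (10335 + g * (787) + f * (2100 + g * (111) + f * (74 + g * (2))) + r * (489 + f * (66 + f))) + e2 * (10785 + g * (1633 + g * (41)) + f * (2886 + g * (301 + g * (4)) + f * (114 + g * (6))) + r * (3088 + g * (136) + f * (382 + g * (9) + f * (6)) + r * (89 + f * (5))) + e2 * (3099 + g * (276 + g * (3)) + f * (516 + g * (24) + f * (9)) + r * (456 + g * (9) + f * (27) + r * (6)) + e2 * (459 + g * (18) + f * (36) + r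 * (27) + e2 * (27)))))) + e1 * (26136 + g * (10350 + g * (896)) + f * (10350 + g * (3608 + g * (277)) + f * (896 + g * (277 + g * (18)))) + r * (18808 + g * (2700) + f * (5541 + g * (732) + f * (373 + g * (42))) + r * (1280 + f * (327 + f * (17)))) + e2 * (53408 + g * (13965 + g * (704)) + f * (17046 + g * (3631 + g * (132)) + f * (1103 + g * (176 + g * (3)))) + r * (23891 + g * (2131) + f * (5008 + g * (328) + f * (201 + g * (6))) + r * (1063 + f * (156 + f * (3)))) + e2 * (41677 + g * (6928 + g * (194)) + f * (9708 + g * (1132 + g * (16)) + f * (388 + g * (22))) + r * (10983 + g * (551) + f * (1398 + g * (35) + f * (22)) + r * (290 + f * (18))) + e2 * (15656 + g * (1509 + g * (18)) + f * (2294 + g * (112) + f * (39)) + r * (2181 + g * (47) + f * (123) + r * (26)) + e2 * (2841 + g * (120) + f * (192) + r * (159) + e2 * (198))))) + e1 * (30816 + g * (8826 + g * (536)) + f * (8826 + g * (2147 + g * (103)) + f * (536 + g * (103 + g * (3)))) + r * (13034 + g * (1368) + f * (2778 + g * (234) + f * (118 + g * (6))) + r * (574 + f * (90 + f * (2)))) + e2 * (48322 + g * (8869 + g * (287)) + f * (10355 + g * (1394 + g * (24)) + f * (409 + g * (30))) + r * (12367 + g * (719) + f * (1643 + g * (51) + f * (30)) + r * (313 + f * (21))) + e2 * (27325 + g * (2893 + g * (39)) + f * (3763 + g * (208) + f * (67)) + r * (3769 + g * (92) + f * (223) + r * (42)) + e2 * (6622 + g * (306) + f * (424) + r * (370) +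 e2 * (579)))) + e1 * (17368 + g * (3498 + g * (134)) + f * (3498 + g * (536 + g * (12)) + f * (134 + g * (12))) + r * (4424 + g * (300) + f * (604 + g * (24) + f * (12)) + r * (112 + f * (8))) + e2 * (19896 + g * (2320 + g * (36)) + f * (2632 + g * (168) + f * (48)) + r * (2776 + g * (78) + f * (174) + r * (30)) + e2 * (7320 + g * (372) + f * (460) + r * (418) + e2 * (864))) + e1 * (5164 + g * (660 + g * (12)) + f * (660 + g * (48) + f * (12)) + r * (736 + g * (24) + f * (48) + r * (8)) + e2 * (3864 + g * (216) + f * (240) + r * (228) + e2 * (696)) + e1 * (784 + g * (48) + f * (48) + r * (48) + e2 * (288) + e1 * (48)))))) + c * (12900 + g * (6433 + g * (537)) + f * (6433 + g * (2188 + g * (123)) + f * (537 + g * (123))) + r * (17683 + g * (2202) + f * (4464 + g * (417) + f * (206)) + r * (1205 + f * (220))) + e2 * (30641 + g * (8533 + g * (390)) + f * (11208 + g * (2051 + g * (51)) + f * (631 + g * (51))) + r * (20535 + g * (1509) + f * (3400 + g * (132) + f * (60)) + r * (901 + f * (79))) + e2 * (25991 + g * (4236 + g * (107)) + f * (6372 + g * (604 + g * (6)) + f * (186 + g * (6))) + r * (8508 + g * (338) + f * (779 + g * (13) + f * (6)) + r * (217 + f * (7))) + e2 * (10269 + g * (937 + g * (10)) + f * (1476 + g * (59) + f * (18)) + r * (1525 + g * (27) + f * (65) + r * (17)) + e2 * (1920 + g * (75) + f * (123) + r * (105) + e2 * (135))))) + e1 * (45184 + g * (13359 + g * (735)) +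 f * (13359 + g * (2968 + g * (102)) + f * (735 + g * (102))) + r * (25126 + g * (2253) + f * (4583 + g * (264) + f * (134)) + r * (1036 + f * (109))) + e2 * (72850 + g * (12894 + g * (359)) + f * (15482 + g * (1732 + g * (18)) + f * (503 + g * (18))) + r * (21825 + g * (1026) + f * (2270 + g * (39) + f * (18)) + r * (506 + f * (20))) + e2 * (41411 + g * (4027 + g * (44)) + f * (5354 + g * (225) + f * (66)) + r * (5984 + g * (111) + f * (247) + r * (60)) + e2 * (9908 + g * (401) + f * (559) + r * (523) + e2 * (837)))) + e1 * (44540 + g * (8730 + g * (294)) + f * (8730 + g * (1180 + g * (18)) + f * (294 + g * (18))) + r * (12987 + g * (741) + f * (1505 + g * (39) + f * (20)) + r * (289 + f * (13))) + e2 * (50637 + g * (5479 + g * (70)) + f * (6283 + g * (321) + f * (90)) + r * (7446 + g * (165) + f * (357) + r * (69)) + e2 * (18179 + g * (816) + f * (1011) + r * (1001) + e2 * (2052))) + e1 * (19136 + g * (2312 + g * (36)) + f * (2312 + g * (144) + f * (36)) + r * (2900 + g * (78) + f * (158) + r * (26)) + e2 * (13964 + g * (706) + f * (786) + r * (816) + e2 * (2410)) + e1 * (3808 + g * (216) + f * (216) + r * (236) + e2 * (1348) + e1 * (288))))) + c * (8049 + g * (3191 + g * (143)) + f * (3191 + g * (567) + f * (143)) + r * (9797 + g * (624) + f * (1228) + r * (345)) + e2 * (17122 + g * (3088 + g * (65)) + f * (3930 + g * (276) + f * (72)) + r * (7189 + g * (202) + f * (370) + r * (129)) + e2 * (11127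 + g * (992 + g * (8)) + f * (1327 + g * (35) + f * (9)) + r * (1632 + g * (20) + f * (38) + r * (12)) + e2 * (2859 + g * (101) + f * (138) + r * (134) + e2 * (249)))) + e1 * (28310 + g * (5458 + g * (137)) + f * (5458 + g * (552) + f * (137)) + r * (10480 + g * (411) + f * (838) + r * (174)) + e2 * (33285 + g * (3179 + g * (25)) + f * (3702 + g * (105) + f * (27)) + r * (5068 + g * (62) + f * (116) + r * (33)) + e2 * (11868 + g * (423) + f * (519) + r * (550) + e2 * (1276))) + e1 * (21933 + g * (2413 + g * (26)) + f * (2413 + g * (105) + f * (26)) + r * (3565 + g * (63) + f * (130) + r * (21)) + e2 * (15609 + g * (651) + f * (726) + r * (835) + e2 * (2531)) + e1 * (6348 + g * (314) + f * (314) + r * (386) + e2 * (2126) + e1 * (628)))) + c * (1978 + g * (520) + f * (520) + r * (1806) + e2 * (4058 + g * (318) + f * (367) + r * (550) + e2 * (1759 + g * (44) + f * (51) + r * (56) + e2 * (201))) + e1 * (7568 + g * (685) + f * (685) + r * (1296) + e2 * (5502 + g * (138) + f * (152) + r * (182) + e2 * (822)) + e1 * (4058 + g * (145) + f * (145) + r * (210) + e2 * (1240) + e1 * (580))) + c * (137 + e2 * (361 + e2 * (60)) + e1 * (722 + e2 * (185) + e1 * (185)))))) + b * (19518 + g * (9567 + g * (927)) + f * (7216 + g * (2898 + g * (238)) + f * (506 + g * (162 + g * (9)))) + r * (19635 + g * (2868) + f * (5073 + g * (649) + f * (258 + g * (21))) + r * (1305 + f * (265 + f * (5)))) + e2 *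 (43321 + g * (12828 + g * (678)) + f * (12828 + g * (2862 + g * (97)) + f * (678 + g * (97 + g))) + r * (23756 + g * (2066) + f * (4208 + g * (238) + f * (113 + g * (2))) + r * (986 + f * (103 + f))) + e2 * (35313 + g * (6265 + g * (178)) + f * (7422 + g * (833 + g * (10)) + f * (232 + g * (10))) + r * (10227 + g * (481) + f * (1031 + g * (21) + f * (10)) + r * (240 + f * (10))) + e2 * (13529 + g * (1342 + g * (16)) + f * (1706 + g * (75) + f * (21)) + r * (1882 + g * (38) + f * (80) + r * (19)) + e2 * (2466 + g * (105) + f * (135) + r * (129) + e2 * (171))))) + e1 * (53408 + g * (17046 + g * (1103)) + f * (13965 + g * (3631 + g * (176)) + f * (704 + g * (132 + g * (3)))) + r * (27303 + g * (2858) + f * (5131 + g * (404) + f * (169 + g * (6))) + r * (1121 + f * (133 + f))) + e2 * (86140 + g * (16776 + g * (545)) + f * (16776 + g * (2256 + g * (34)) + f * (545 + g * (34))) + r * (24593 + g * (1362) + f * (2760 + g * (71) + f * (34)) + r * (552 + f * (26))) + e2 * (49093 + g * (5286 + g * (68)) + f * (5998 + g * (305) + f * (83)) + r * (6979 + g * (154) + f * (324) + r * (66)) + e2 * (11788 + g * (533) + f * (639) + r * (627) + e2 * (1005)))) + e1 * (48322 + g * (10355 + g * (409)) + f * (8869 + g * (1394 + g * (30)) + f * (287 + g * (24))) + r * (13892 + g * (922) + f * (1674 + g * (60) + f * (26)) + r * (312 + f * (16))) + e2 * (55675 + g * (6653 + g * (100)) + f * (6653 + g * (409) + f * (100)) +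 r * (8236 + g * (215) + f * (433) + r * (75)) + e2 * (20273 + g * (1014) + f * (1119) + r * (1145) + e2 * (2328))) + e1 * (19896 + g * (2632 + g * (48)) + f * (2320 + g * (168) + f * (36)) + r * (3068 + g * (96) + f * (176) + r * (28)) + e2 * (14780 + g * (826) + f * (826) + r * (892) + e2 * (2602)) + e1 * (3864 + g * (240) + f * (216) + r * (248) + e2 * (1396) + e1 * (288))))) + c * (30641 + g * (11208 + g * (631)) + f * (8533 + g * (2051 + g * (51)) + f * (390 + g * (51))) + r * (24185 + g * (1992) + f * (3639 + g * (132) + f * (74)) + r * (825 + f * (30))) + e2 * (55112 + g * (10598 + g * (275)) + f * (10598 + g * (1076 + g * (6)) + f * (275 + g * (6))) + r * (19187 + g * (754) + f * (1452 + g * (13) + f * (6)) + r * (330 + f * (6))) + e2 * (32858 + g * (3200 + g * (30)) + f * (3580 + g * (118) + f * (30)) + r * (4673 + g * (70) + f * (128) + r * (33)) + e2 * (7946 + g * (303) + f * (343) + r * (371) + e2 * (660)))) + e1 * (72850 + g * (15482 + g * (503)) + f * (12894 + g * (1732 + g * (18)) + f * (359 + g * (18))) + r * (25109 + g * (1278) + f * (2416 + g * (39) + f * (22)) + r * (420 + f * (6))) + e2 * (85022 + g * (9262 + g * (102)) + f * (9262 + g * (402) + f * (102)) + r * (13060 + g * (232) + f * (452) + r * (84)) + e2 * (30370 + g * (1275) + f * (1383) + r * (1533) + e2 * (3308))) + e1 * (50637 + g * (6283 + g * (90)) + f * (5479 + g * (321) + f * (70)) + r * (8384 + g * (195) + f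 * (377) + r * (51)) + e2 * (36752 + g * (1788) + f * (1788) + r * (2116) + e2 * (6136)) + e1 * (13964 + g * (786) + f * (706) + r * (900) + e2 * (4824) + e1 * (1348)))) + c * (17122 + g * (3930 + g * (72)) + f * (3088 + g * (276) + f * (65)) + r * (8709 + g * (209) + f * (468) + r * (45)) + e2 * (23205 + g * (2149 + g * (9)) + f * (2149 + g * (35) + f * (9)) + r * (3454 + g * (22) + f * (40) + r * (9)) + e2 * (8568 + g * (252) + f * (258) + r * (316) + e2 * (883))) + e1 * (33285 + g * (3702 + g * (27)) + f * (3179 + g * (105) + f * (25)) + r * (5950 + g * (64) + f * (144) + r * (9)) + e2 * (23988 + g * (870) + f * (870) + r * (1116) + e2 * (3700)) + e1 * (15609 + g * (726) + f * (651) + r * (953) + e2 * (5036) + e1 * (2126))) + c * (4058 + g * (367) + f * (318) + r * (746) + e2 * (3428 + g * (50) + f * (50) + r * (70) + e2 * (459)) + e1 * (5502 + g * (152) + f * (138) + r * (238) + e2 * (1576) + e1 * (1240)) + c * (361 + e2 * (65) + e1 * (185))))) + b * (20364 + g * (7713 + g * (528)) + f * (4835 + g * (1410 + g * (65)) + f * (208 + g * (43 + g))) + r * (13866 + g * (1392) + f * (2281 + g * (149) + f * (65 + g * (2))) + r * (480 + f * (30))) + e2 * (35313 + g * (7422 + g * (232)) + f * (6265 + g * (833 + g * (10)) + f * (178 + g * (10))) + r * (11663 + g * (577) + f * (1075 + g * (21) + f * (10)) + r * (201 + f * (6))) + e2 * (20682 + g * (2230 + g * (25)) + f * (2230 + g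 * (99) + f * (25)) + r * (3003 + g * (55) + f * (106) + r * (21)) + e2 * (4935 + g * (208) + f * (221) + r * (241) + e2 * (405)))) + e1 * (41677 + g * (9708 + g * (388)) + f * (6928 + g * (1132 + g * (22)) + f * (194 + g * (16))) + r * (14150 + g * (880) + f * (1502 + g * (44) + f * (20)) + r * (246 + f * (6))) + e2 * (49093 + g * (5998 + g * (83)) + f * (5286 + g * (305) + f * (68)) + r * (7787 + g * (177) + f * (335) + r * (51)) + e2 * (17776 + g * (852) + f * (852) + r * (971) + e2 * (1972))) + e1 * (27325 + g * (3763 + g * (67)) + f * (2893 + g * (208) + f * (39)) + r * (4676 + g * (134) + f * (236) + r * (30)) + e2 * (20273 + g * (1119) + f * (1014) + r * (1251) + e2 * (3479)) + e1 * (7320 + g * (460) + f * (372) + r * (500) + e2 * (2602) + e1 * (696)))) + c * (25991 + g * (6372 + g * (186)) + f * (4236 + g * (604 + g * (6)) + f * (107 + g * (6))) + r * (11670 + g * (471) + f * (950 + g * (13) + f * (8)) + r * (90)) + e2 * (32858 + g * (3580 + g * (30)) + f * (3200 + g * (118) + f * (30)) + r * (5311 + g * (68) + f * (138) + r * (18)) + e2 * (11834 + g * (435) + f * (435) + r * (526) + e2 * (1217))) + e1 * (41411 + g * (5354 + g * (66)) + f * (4027 + g * (225) + f * (44)) + r * (7804 + g * (143) + f * (295) + r * (18)) + e2 * (30370 + g * (1383) + f * (1275) + r * (1699) + e2 * (4874)) + e1 * (18179 + g * (1011) + f * (816) + r * (1245) + e2 * (6136) + e1 * (2410))) + c * (11127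 + g * (1327 + g * (9)) + f * (992 + g * (35) + f * (8)) + r * (2367 + g * (21) + f * (52)) + e2 * (8568 + g * (258) + f * (252) + r * (347) + e2 * (1214)) + e1 * (11868 + g * (519) + f * (423) + r * (752) + e2 * (3700) + e1 * (2531)) + c * (1759 + g * (51) + f * (44) + r * (84) + e2 * (459) + e1 * (822) + c * (60)))) + b * (10785 + g * (2886 + g * (114)) + f * (1633 + g * (301 + g * (6)) + f * (41 + g * (4))) + r * (4719 + g * (258) + f * (459 + g * (12) + f * (6)) + r * (45)) + e2 * (13529 + g * (1706 + g * (21)) + f * (1342 + g * (75) + f * (16)) + r * (2364 + g * (45) + f * (87) + r * (9)) + e2 * (4935 + g * (221) + f * (208) + r * (258) + e2 * (523))) + e1 * (15656 + g * (2294 + g * (39)) + f * (1509 + g * (112) + f * (18)) + r * (3123 + g * (78) + f * (144) + r * (9)) + e2 * (11788 + g * (639) + f * (533) + r * (753) + e2 * (1972)) + e1 * (6622 + g * (424) + f * (306) + r * (498) + e2 * (2328) + e1 * (864))) + c * (10269 + g * (1476 + g * (18)) + f * (937 + g * (59) + f * (10)) + r * (2409 + g * (39) + f * (87)) + e2 * (7946 + g * (343) + f * (303) + r * (447) + e2 * (1217)) + e1 * (9908 + g * (559) + f * (401) + r * (765) + e2 * (3308) + e1 * (2052)) + c * (2859 + g * (138) + f * (101) + r * (219) + e2 * (883) + e1 * (1276) + c * (201))) + b * (3099 + g * (516 + g * (9)) + f * (276 + g * (24) + f * (3)) + r * (792 + g * (18) + f * (36)) + e2 * (2466 + g * (135)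 + f * (105) + r * (171) + e2 * (405)) + e1 * (2841 + g * (192) + f * (120) + r * (252) + e2 * (1005) + e1 * (579)) + c * (1920 + g * (123) + f * (75) + r * (189) + e2 * (660) + e1 * (837) + c * (249)) + b * (459 + g * (36) + f * (18) + r * (54) + e2 * (171) + e1 * (198) + c * (135) + b * (27)))))) + a * (15840 + g * (6294 + g * (506)) + f * (6294 + g * (2038 + g * (128)) + f * (506 + g * (128 + g * (4)))) + r * (14494 + g * (1956) + f * (3988 + g * (464) + f * (234 + g * (18))) + r * (1130 + f * (272 + f * (12)))) + e2 * (40370 + g * (10991 + g * (571)) + f * (13227 + g * (2798 + g * (99)) + f * (825 + g * (118 + g))) + r * (23497 + g * (2150) + f * (4854 + g * (319) + f * (181 + g * (3))) + r * (1283 + f * (190 + f * (2)))) + e2 * (41063 + g * (7597 + g * (252)) + f * (10296 + g * (1349 + g * (25)) + f * (434 + g * (28))) + r * (14577 + g * (839) + f * (2014 + g * (62) + f * (34)) + r * (515 + f * (37))) + e2 * (21505 + g * (2618 + g * (52)) + f * (3740 + g * (274 + g * (2)) + f * (86 + g * (2))) + r * (4330 + g * (140) + f * (337 + g * (4) + f * (2)) + r * (86 + f * (2))) + e2 * (6145 + g * (449 + g * (4)) + f * (640 + g * (20) + f * (6)) + r * (623 + g * (9) + f * (21) + r * (5)) + e2 * (909 + g * (30) + f * (42) + r * (36) + e2 * (54)))))) + e1 * (50844 + g * (14857 + g * (889)) + f * (14857 + g * (3560 + g * (155)) + f * (889 + g * (155 + g * (2)))) + r * (26339 + g * (2746) +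 f * (5563 + g * (442) + f * (222 + g * (6))) + r * (1393 + f * (219 + f * (3)))) + e2 * (102043 + g * (20441 + g * (757)) + f * (23470 + g * (3500 + g * (76)) + f * (992 + g * (82))) + r * (33640 + g * (2207) + f * (4877 + g * (186) + f * (99)) + r * (1136 + f * (91))) + e2 * (78962 + g * (10311 + g * (216)) + f * (12938 + g * (1056 + g * (8)) + f * (315 + g * (8))) + r * (15365 + g * (556) + f * (1279 + g * (16) + f * (8)) + r * (290 + f * (8))) + e2 * (29497 + g * (2257 + g * (20)) + f * (2943 + g * (96) + f * (28)) + r * (2970 + g * (44) + f * (100) + r * (23)) + e2 * (5312 + g * (178) + f * (232) + r * (206) + e2 * (366))))) + e1 * (58604 + g * (12734 + g * (537)) + f * (12734 + g * (2148 + g * (56)) + f * (537 + g * (56))) + r * (18707 + g * (1400) + f * (2822 + g * (132) + f * (66)) + r * (621 + f * (54))) + e2 * (90825 + g * (12874 + g * (299)) + f * (14368 + g * (1332 + g * (12)) + f * (367 + g * (12))) + r * (17573 + g * (724) + f * (1566 + g * (24) + f * (12)) + r * (322 + f * (10))) + e2 * (50874 + g * (4192 + g * (40)) + f * (5008 + g * (184) + f * (52)) + r * (5215 + g * (86) + f * (190) + r * (39)) + e2 * (12175 + g * (434) + f * (532) + r * (485) + e2 * (1042)))) + e1 * (33180 + g * (5119 + g * (135)) + f * (5119 + g * (540 + g * (6)) + f * (135 + g * (6))) + r * (6486 + g * (306) + f * (614 + g * (12) + f * (6)) + r * (118 + f * (4))) + e2 * (37496 + g * (3364 + g * (36)) +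 f * (3680 + g * (156) + f * (42)) + r * (3962 + g * (75) + f * (159) + r * (29)) + e2 * (13572 + g * (526) + f * (606) + r * (567) + e2 * (1562))) + e1 * (10004 + g * (980 + g * (12)) + f * (980 + g * (48) + f * (12)) + r * (1096 + g * (24) + f * (48) + r * (8)) + e2 * (7344 + g * (312) + f * (336) + r * (324) + e2 * (1288)) + e1 * (1544 + g * (72) + f * (72) + r * (72) + e2 * (552) + e1 * (96)))))) + c * (29896 + g * (9361 + g * (507)) + f * (9361 + g * (2036 + g * (62)) + f * (507 + g * (62))) + r * (23245 + g * (2094) + f * (4180 + g * (240) + f * (117)) + r * (1231 + f * (144))) + e2 * (64071 + g * (12631 + g * (400)) + f * (15000 + g * (1854 + g * (23)) + f * (529 + g * (23))) + r * (27403 + g * (1453) + f * (3120 + g * (60) + f * (29)) + r * (885 + f * (37))) + e2 * (51721 + g * (6317 + g * (111)) + f * (8112 + g * (510 + g * (2)) + f * (143 + g * (2))) + r * (11287 + g * (303) + f * (645 + g * (4) + f * (2)) + r * (188 + f * (2))) + e2 * (19860 + g * (1386 + g * (10)) + f * (1776 + g * (44) + f * (12)) + r * (1945 + g * (22) + f * (46) + r * (12)) + e2 * (3637 + g * (109) + f * (137) + r * (128) + e2 * (252))))) + e1 * (86878 + g * (18443 + g * (675)) + f * (18443 + g * (2704 + g * (46)) + f * (675 + g * (46))) + r * (33197 + g * (2070) + f * (4154 + g * (120) + f * (60)) + r * (1017 + f * (53))) + e2 * (136044 + g * (17967 + g * (343)) + f * (20233 + g * (1496 + g * (6)) + f * (405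 + g * (6))) + r * (28614 + g * (908) + f * (1910 + g * (12) + f * (6)) + r * (451 + f * (6))) + e2 * (75926 + g * (5591 + g * (40)) + f * (6642 + g * (172) + f * (46)) + r * (7588 + g * (87) + f * (179) + r * (45)) + e2 * (17844 + g * (540) + f * (642) + r * (620) + e2 * (1470)))) + e1 * (82110 + g * (11885 + g * (261)) + f * (11885 + g * (1044 + g * (6)) + f * (261 + g * (6))) + r * (17226 + g * (648) + f * (1304 + g * (12) + f * (6)) + r * (263 + f * (4))) + e2 * (91508 + g * (7384 + g * (60)) + f * (8068 + g * (252) + f * (66)) + r * (9548 + g * (129) + f * (265) + r * (54)) + e2 * (32171 + g * (1060) + f * (1200) + r * (1195) + e2 * (3517))) + e1 * (34976 + g * (3124 + g * (30)) + f * (3124 + g * (120) + f * (30)) + r * (3838 + g * (63) + f * (127) + r * (21)) + e2 * (24906 + g * (917) + f * (981) + r * (1010) + e2 * (4151)) + e1 * (6968 + g * (288) + f * (288) + r * (308) + e2 * (2380) + e1 * (528))))) + c * (20632 + g * (4594 + g * (127)) + f * (4594 + g * (502) + f * (127)) + r * (12384 + g * (559) + f * (1089) + r * (334)) + e2 * (36150 + g * (4391 + g * (56)) + f * (5053 + g * (226) + f * (57)) + r * (9104 + g * (158) + f * (298) + r * (100)) + e2 * (21559 + g * (1362 + g * (6)) + f * (1577 + g * (24) + f * (6)) + r * (1961 + g * (13) + f * (25) + r * (7)) + e2 * (5255 + g * (130) + f * (148) + r * (150) + e2 * (437)))) + e1 * (53934 + g * (7215 + g * (113)) + f * (7215 +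 g * (452) + f * (113)) + r * (12826 + g * (317) + f * (638) + r * (139)) + e2 * (60536 + g * (4148 + g * (18)) + f * (4515 + g * (72) + f * (18)) + r * (5974 + g * (39) + f * (75) + r * (20)) + e2 * (20834 + g * (519) + f * (569) + r * (594) + e2 * (2141))) + e1 * (39044 + g * (3040 + g * (18)) + f * (3040 + g * (72) + f * (18)) + r * (4199 + g * (39) + f * (79) + r * (13)) + e2 * (26829 + g * (773) + f * (817) + r * (893) + e2 * (4146)) + e1 * (10970 + g * (373) + f * (373) + r * (429) + e2 * (3497) + e1 * (1060)))) + c * (6122 + g * (743) + f * (743) + r * (2192) + e2 * (8464 + g * (420) + f * (441) + r * (634) + e2 * (3209 + g * (51) + f * (53) + r * (58) + e2 * (334))) + e1 * (14328 + g * (861) + f * (861) + r * (1401) + e2 * (9644 + g * (155) + f * (159) + r * (178) + e2 * (1327)) + e1 * (6916 + g * (157) + f * (157) + r * (193) + e2 * (1957) + e1 * (918))) + c * (650 + e2 * (682 + e2 * (95)) + e1 * (1364 + e2 * (290) + e1 * (290)))))) + b * (40370 + g * (13227 + g * (825)) + f * (10991 + g * (2798 + g * (118)) + f * (571 + g * (99 + g))) + r * (26087 + g * (2690) + f * (4889 + g * (363) + f * (158 + g * (3))) + r * (1341 + f * (173 + f))) + e2 * (83988 + g * (17878 + g * (653)) + f * (17878 + g * (2656 + g * (49)) + f * (653 + g * (49))) + r * (31889 + g * (1982) + f * (3969 + g * (122) + f * (60)) + r * (991 + f * (54))) + e2 * (66168 + g * (8774 + g * (171)) + f * (9830 + g *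 (744 + g * (4)) + f * (200 + g * (4))) + r * (13662 + g * (439) + f * (913 + g * (8) + f * (4)) + r * (220 + f * (4))) + e2 * (24777 + g * (1847 + g * (14)) + f * (2159 + g * (60) + f * (16)) + r * (2423 + g * (30) + f * (62) + r * (15)) + e2 * (4404 + g * (137) + f * (159) + r * (154) + e2 * (294))))) + e1 * (102043 + g * (23470 + g * (992)) + f * (20441 + g * (3500 + g * (82)) + f * (757 + g * (76))) + r * (36971 + g * (2663) + f * (4921 + g * (198) + f * (93)) + r * (1123 + f * (70))) + e2 * (159770 + g * (23093 + g * (509)) + f * (23093 + g * (2048 + g * (14)) + f * (509 + g * (14))) + r * (33030 + g * (1244) + f * (2484 + g * (28) + f * (14)) + r * (515 + f * (10))) + e2 * (89183 + g * (7204 + g * (60)) + f * (7829 + g * (252) + f * (66)) + r * (9108 + g * (127) + f * (259) + r * (54)) + e2 * (20946 + g * (696) + f * (778) + r * (766) + e2 * (1724)))) + e1 * (90825 + g * (14368 + g * (367)) + f * (12874 + g * (1332 + g * (12)) + f * (299 + g * (12))) + r * (19111 + g * (842) + f * (1580 + g * (24) + f * (12)) + r * (295 + f * (6))) + e2 * (102248 + g * (9092 + g * (88)) + f * (9092 + g * (352) + f * (88)) + r * (11004 + g * (182) + f * (362) + r * (63)) + e2 * (36362 + g * (1336) + f * (1422) + r * (1441) + e2 * (4035))) + e1 * (37496 + g * (3680 + g * (42)) + f * (3364 + g * (156) + f * (36)) + r * (4260 + g * (84) + f * (160) + r * (24)) + e2 * (27138 + g * (1113) + f * (1113) + r * (1172)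 + e2 * (4617)) + e1 * (7344 + g * (336) + f * (312) + r * (344) + e2 * (2564) + e1 * (552))))) + c * (64071 + g * (15000 + g * (529)) + f * (12631 + g * (1854 + g * (23)) + f * (400 + g * (23))) + r * (30562 + g * (1735) + f * (3212 + g * (60) + f * (31)) + r * (800 + f * (16))) + e2 * (104902 + g * (14115 + g * (233)) + f * (14115 + g * (928 + g * (2)) + f * (233 + g * (2))) + r * (24248 + g * (618) + f * (1216 + g * (4) + f * (2)) + r * (275 + f * (2))) + e2 * (59464 + g * (4157 + g * (22)) + f * (4468 + g * (88) + f * (22)) + r * (5675 + g * (47) + f * (91) + r * (23)) + e2 * (13806 + g * (364) + f * (390) + r * (408) + e2 * (1084)))) + e1 * (136044 + g * (20233 + g * (405)) + f * (17967 + g * (1496 + g * (6)) + f * (343 + g * (6))) + r * (31490 + g * (1022) + f * (1974 + g * (12) + f * (6)) + r * (353 + f * (2))) + e2 * (152236 + g * (11882 + g * (76)) + f * (11882 + g * (304) + f * (76)) + r * (15868 + g * (162) + f * (322) + r * (58)) + e2 * (52478 + g * (1538) + f * (1612) + r * (1718) + e2 * (5436))) + e1 * (91508 + g * (8068 + g * (66)) + f * (7384 + g * (252) + f * (60)) + r * (10364 + g * (138) + f * (274) + r * (35)) + e2 * (64034 + g * (2177) + f * (2177) + r * (2426) + e2 * (10194)) + e1 * (24906 + g * (981) + f * (917) + r * (1080) + e2 * (8212) + e1 * (2380)))) + c * (36150 + g * (5053 + g * (57)) + f * (4391 + g * (226) + f * (56)) + r * (10298 + g * (159) + f * (340) + r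 * (39)) + e2 * (42810 + g * (2684 + g * (6)) + f * (2684 + g * (24) + f * (6)) + r * (3954 + g * (13) + f * (25) + r * (6)) + e2 * (14696 + g * (282) + f * (284) + r * (318) + e2 * (1395))) + e1 * (60536 + g * (4515 + g * (18)) + f * (4148 + g * (72) + f * (18)) + r * (6627 + g * (39) + f * (83) + r * (6)) + e2 * (40922 + g * (973) + f * (973) + r * (1132) + e2 * (5850)) + e1 * (26829 + g * (817) + f * (773) + r * (973) + e2 * (8070) + e1 * (3497))) + c * (8464 + g * (441) + f * (420) + r * (767) + e2 * (5954 + g * (53) + f * (53) + r * (62) + e2 * (705)) + e1 * (9644 + g * (159) + f * (155) + r * (208) + e2 * (2420) + e1 * (1957)) + c * (682 + e2 * (100) + e1 * (290))))) + b * (41063 + g * (10296 + g * (434)) + f * (7597 + g * (1349 + g * (28)) + f * (252 + g * (25))) + r * (17822 + g * (1208) + f * (2082 + g * (68) + f * (32)) + r * (466 + f * (16))) + e2 * (66168 + g * (9830 + g * (200)) + f * (8774 + g * (744 + g * (4)) + f * (171 + g * (4))) + r * (14977 + g * (492) + f * (937 + g * (8) + f * (4)) + r * (175 + f * (2))) + e2 * (37158 + g * (2910 + g * (20)) + f * (2910 + g * (80) + f * (20)) + r * (3757 + g * (42) + f * (82) + r * (16)) + e2 * (8568 + g * (256) + f * (266) + r * (279) + e2 * (669)))) + e1 * (78962 + g * (12938 + g * (315)) + f * (10311 + g * (1056 + g * (8)) + f * (216 + g * (8))) + r * (18341 + g * (731) + f * (1325 + g * (16) + f * (8)) + r * (214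 + f * (2))) + e2 * (89183 + g * (7829 + g * (66)) + f * (7204 + g * (252) + f * (60)) + r * (9830 + g * (136) + f * (264) + r * (38)) + e2 * (31182 + g * (1061) + f * (1061) + r * (1151) + e2 * (3305))) + e1 * (50874 + g * (5008 + g * (52)) + f * (4192 + g * (184) + f * (40)) + r * (6070 + g * (104) + f * (196) + r * (22)) + e2 * (36362 + g * (1422) + f * (1336) + r * (1530) + e2 * (5970)) + e1 * (13572 + g * (606) + f * (526) + r * (642) + e2 * (4617) + e1 * (1288)))) + c * (51721 + g * (8112 + g * (143)) + f * (6317 + g * (510 + g * (2)) + f * (111 + g * (2))) + r * (13919 + g * (361) + f * (719 + g * (4) + f * (2)) + r * (78)) + e2 * (59464 + g * (4468 + g * (22)) + f * (4157 + g * (88) + f * (22)) + r * (6213 + g * (47) + f * (95) + r * (12)) + e2 * (20226 + g * (505) + f * (505) + r * (565) + e2 * (1945))) + e1 * (75926 + g * (6642 + g * (46)) + f * (5591 + g * (172) + f * (40)) + r * (9057 + g * (96) + f * (196) + r * (12)) + e2 * (52478 + g * (1612) + f * (1538) + r * (1840) + e2 * (7890)) + e1 * (32171 + g * (1200) + f * (1060) + r * (1380) + e2 * (10194) + e1 * (4151))) + c * (21559 + g * (1577 + g * (6)) + f * (1362 + g * (24) + f * (6)) + r * (2487 + g * (13) + f * (29)) + e2 * (14696 + g * (284) + f * (282) + r * (341) + e2 * (1890)) + e1 * (20834 + g * (569) + f * (519) + r * (719) + e2 * (5850) + e1 * (4146)) + c * (3209 + g * (53) + f * (51) + r * (73) +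 e2 * (705) + e1 * (1327) + c * (95)))) + b * (21505 + g * (3740 + g * (86)) + f * (2618 + g * (274 + g * (2)) + f * (52 + g * (2))) + r * (5761 + g * (200) + f * (369 + g * (4) + f * (2)) + r * (39)) + e2 * (24777 + g * (2159 + g * (16)) + f * (1847 + g * (60) + f * (14)) + r * (2843 + g * (33) + f * (65) + r * (6)) + e2 * (8568 + g * (266) + f * (256) + r * (293) + e2 * (858))) + e1 * (29497 + g * (2943 + g * (28)) + f * (2257 + g * (96) + f * (20)) + r * (3789 + g * (56) + f * (108) + r * (6)) + e2 * (20946 + g * (778) + f * (696) + r * (866) + e2 * (3305)) + e1 * (12175 + g * (532) + f * (434) + r * (592) + e2 * (4035) + e1 * (1562))) + c * (19860 + g * (1776 + g * (12)) + f * (1386 + g * (44) + f * (10)) + r * (2606 + g * (25) + f * (53)) + e2 * (13806 + g * (390) + f * (364) + r * (464) + e2 * (1945)) + e1 * (17844 + g * (642) + f * (540) + r * (786) + e2 * (5436) + e1 * (3517)) + c * (5255 + g * (148) + f * (130) + r * (199) + e2 * (1395) + e1 * (2141) + c * (334))) + b * (6145 + g * (640 + g * (6)) + f * (449 + g * (20) + f * (4)) + r * (888 + g * (12) + f * (24)) + e2 * (4404 + g * (159) + f * (137) + r * (186) + e2 * (669)) + e1 * (5312 + g * (232) + f * (178) + r * (276) + e2 * (1724) + e1 * (1042)) + c * (3637 + g * (137) + f * (109) + r * (180) + e2 * (1084) + e1 * (1470) + c * (437)) + b * (909 + g * (42) + f * (30) + r * (54) + e2 * (294) + e1 * (366) +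 c * (252) + b * (54)))))) + a * (12360 + g * (3250 + g * (154)) + f * (3250 + g * (617 + g * (15)) + f * (154 + g * (15))) + r * (7534 + g * (676) + f * (1361 + g * (82) + f * (41 + g)) + r * (434 + f * (59 + f))) + e2 * (30554 + g * (5780 + g * (186)) + f * (6517 + g * (830 + g * (11)) + f * (229 + g * (12))) + r * (12334 + g * (756) + f * (1618 + g * (51) + f * (27)) + r * (486 + f * (36))) + e2 * (30487 + g * (4031 + g * (83)) + f * (4894 + g * (384 + g * (2)) + f * (110 + g * (2))) + r * (7619 + g * (284) + f * (628 + g * (6) + f * (3)) + r * (181 + f * (4))) + e2 * (15714 + g * (1375 + g * (16)) + f * (1706 + g * (70) + f * (19)) + r * (2192 + g * (41) + f * (88) + r * (25)) + e2 * (4404 + g * (227 + g) + f * (273 + g * (4) + f) + r * (292 + g * (2) + f * (4) + r) + e2 * (633 + g * (14) + f * (16) + r * (15) + e2 * (36)))))) + e1 * (37588 + g * (7584 + g * (268)) + f * (7584 + g * (1072 + g * (16)) + f * (268 + g * (16))) + r * (13820 + g * (924) + f * (1856 + g * (64) + f * (32)) + r * (524 + f * (40))) + e2 * (74302 + g * (10524 + g * (236)) + f * (11512 + g * (1010 + g * (6)) + f * (269 + g * (6))) + r * (17543 + g * (725) + f * (1525 + g * (18) + f * (9)) + r * (401 + f * (10))) + e2 * (56782 + g * (5288 + g * (65)) + f * (6086 + g * (278) + f * (74)) + r * (7798 + g * (164) + f * (346) + r * (87)) + e2 * (20879 + g * (1124 + g * (5)) + f * (1302 + g * (20) + f * (5))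 + r * (1413 + g * (10) + f * (20) + r * (5)) + e2 * (3663 + g * (82) + f * (92) + r * (87) + e2 * (241))))) + e1 * (42929 + g * (6523 + g * (159)) + f * (6523 + g * (636 + g * (4)) + f * (159 + g * (4))) + r * (9868 + g * (449) + f * (900 + g * (12) + f * (6)) + r * (220 + f * (6))) + e2 * (65612 + g * (6556 + g * (87)) + f * (7026 + g * (360) + f * (93)) + r * (9031 + g * (213) + f * (438) + r * (99)) + e2 * (36146 + g * (2078 + g * (10)) + f * (2302 + g * (40) + f * (10)) + r * (2530 + g * (20) + f * (40) + r * (9)) + e2 * (8426 + g * (200) + f * (220) + r * (210) + e2 * (688)))) + e1 * (24436 + g * (2631 + g * (38)) + f * (2631 + g * (152) + f * (38)) + r * (3413 + g * (90) + f * (180) + r * (37)) + e2 * (27100 + g * (1682 + g * (9)) + f * (1774 + g * (36) + f * (9)) + r * (1977 + g * (18) + f * (36) + r * (7)) + e2 * (9546 + g * (246) + f * (264) + r * (255) + e2 * (1049))) + e1 * (7435 + g * (501 + g * (3)) + f * (501 + g * (12) + f * (3)) + r * (568 + g * (6) + f * (12) + r * (2)) + e2 * (5306 + g * (150) + f * (156) + r * (153) + e2 * (890)) + e1 * (1156 + g * (36) + f * (36) + r * (36) + e2 * (396) + e1 * (72)))))) + c * (23520 + g * (4713 + g * (147)) + f * (4713 + g * (588 + g * (7)) + f * (147 + g * (7))) + r * (11679 + g * (692) + f * (1370 + g * (41) + f * (20)) + r * (453 + f * (30))) + e2 * (47907 + g * (6384 + g * (118)) + f * (7122 + g * (513 +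 g * (2)) + f * (139 + g * (2))) + r * (13760 + g * (464) + f * (966 + g * (6) + f * (3)) + r * (302 + f * (4))) + e2 * (37347 + g * (3142 + g * (30)) + f * (3658 + g * (126) + f * (33)) + r * (5494 + g * (80) + f * (164) + r * (50)) + e2 * (13888 + g * (655 + g * (2)) + f * (743 + g * (8) + f * (2)) + r * (863 + g * (4) + f * (8) + r * (2)) + e2 * (2442 + g * (46) + f * (50) + r * (49) + e2 * (159))))) + e1 * (62746 + g * (8990 + g * (187)) + f * (8990 + g * (748 + g * (4)) + f * (187 + g * (4))) + r * (16425 + g * (626) + f * (1246 + g * (12) + f * (6)) + r * (343 + f * (6))) + e2 * (95894 + g * (8696 + g * (91)) + f * (9352 + g * (376) + f * (97)) + r * (13767 + g * (240) + f * (490) + r * (123)) + e2 * (52254 + g * (2608 + g * (8)) + f * (2862 + g * (32) + f * (8)) + r * (3391 + g * (16) + f * (32) + r * (8)) + e2 * (11867 + g * (226) + f * (242) + r * (239) + e2 * (919)))) + e1 * (57916 + g * (5689 + g * (66)) + f * (5689 + g * (264) + f * (66)) + r * (8309 + g * (168) + f * (336) + r * (73)) + e2 * (63022 + g * (3415 + g * (12)) + f * (3587 + g * (48) + f * (12)) + r * (4310 + g * (24) + f * (48) + r * (10)) + e2 * (21424 + g * (444) + f * (468) + r * (468) + e2 * (2204))) + e1 * (24460 + g * (1452 + g * (6)) + f * (1452 + g * (24) + f * (6)) + r * (1770 + g * (12) + f * (24) + r * (4)) + e2 * (16826 + g * (390) + f * (402) + r * (409) + e2 * (2645)) + e1 *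 (4832 + g * (126) + f * (126) + r * (131) + e2 * (1561) + e1 * (360))))) + c * (16534 + g * (2258 + g * (35)) + f * (2258 + g * (139) + f * (35)) + r * (6018 + g * (177) + f * (344) + r * (118)) + e2 * (26597 + g * (2109 + g * (14)) + f * (2297 + g * (56) + f * (14)) + r * (4320 + g * (39) + f * (76) + r * (25)) + e2 * (14956 + g * (613 + g) + f * (657 + g * (4) + f) + r * (835 + g * (2) + f * (4) + r) + e2 * (3438 + g * (50) + f * (52) + r * (53) + e2 * (262)))) + e1 * (37978 + g * (3335 + g * (28)) + f * (3335 + g * (112) + f * (28)) + r * (5867 + g * (78) + f * (156) + r * (36)) + e2 * (41020 + g * (1840 + g * (3)) + f * (1922 + g * (12) + f * (3)) + r * (2520 + g * (6) + f * (12) + r * (3)) + e2 * (13487 + g * (198) + f * (204) + r * (209) + e2 * (1274))) + e1 * (26332 + g * (1323 + g * (3)) + f * (1323 + g * (12) + f * (3)) + r * (1759 + g * (6) + f * (12) + r * (2)) + e2 * (17316 + g * (294) + f * (300) + r * (313) + e2 * (2469)) + e1 * (7162 + g * (144) + f * (144) + r * (154) + e2 * (2117) + e1 * (661)))) + c * (5072 + g * (357) + f * (357) + r * (1031) + e2 * (6036 + g * (185) + f * (187) + r * (264) + e2 * (2077 + g * (18) + f * (18) + r * (19) + e2 * (191))) + e1 * (9792 + g * (372) + f * (372) + r * (557) + e2 * (6174 + g * (54) + f * (54) + r * (57) + e2 * (753)) + e1 * (4382 + g * (54) + f * (54) + r * (59) + e2 * (1109) + e1 * (530))) + c * (570 +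 e2 * (448 + e2 * (52)) + e1 * (896 + e2 * (157) + e1 * (157)))))) + b * (30554 + g * (6517 + g * (229)) + f * (5780 + g * (830 + g * (12)) + f * (186 + g * (11))) + r * (13165 + g * (860) + f * (1608 + g * (54) + f * (25)) + r * (491 + f * (34))) + e2 * (61235 + g * (8846 + g * (188)) + f * (8846 + g * (755 + g * (4)) + f * (188 + g * (4))) + r * (16065 + g * (621) + f * (1235 + g * (12) + f * (6)) + r * (341 + f * (6))) + e2 * (46987 + g * (4305 + g * (47)) + f * (4626 + g * (194) + f * (50)) + r * (6716 + g * (121) + f * (246) + r * (62)) + e2 * (17151 + g * (871 + g * (3)) + f * (953 + g * (12) + f * (3)) + r * (1108 + g * (6) + f * (12) + r * (3)) + e2 * (2940 + g * (58) + f * (62) + r * (61) + e2 * (184))))) + e1 * (74302 + g * (11512 + g * (269)) + f * (10524 + g * (1010 + g * (6)) + f * (236 + g * (6))) + r * (18618 + g * (799) + f * (1521 + g * (18) + f * (9)) + r * (382 + f * (8))) + e2 * (113554 + g * (11232 + g * (135)) + f * (11232 + g * (540) + f * (135)) + r * (16233 + g * (338) + f * (674) + r * (147)) + e2 * (61909 + g * (3392 + g * (13)) + f * (3560 + g * (52) + f * (13)) + r * (4212 + g * (26) + f * (52) + r * (11)) + e2 * (14067 + g * (298) + f * (314) + r * (311) + e2 * (1090)))) + e1 * (65612 + g * (7026 + g * (93)) + f * (6556 + g * (360) + f * (87)) + r * (9517 + g * (225) + f * (438) + r * (85)) + e2 * (72030 + g * (4305 + g * (19)) + f * (4305 + g *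 (76) + f * (19)) + r * (5181 + g * (38) + f * (76) + r * (13)) + e2 * (24784 + g * (582) + f * (600) + r * (603) + e2 * (2599))) + e1 * (27100 + g * (1774 + g * (9)) + f * (1682 + g * (36) + f * (9)) + r * (2065 + g * (18) + f * (36) + r * (5)) + e2 * (18958 + g * (498) + f * (498) + r * (511) + e2 * (3058)) + e1 * (5306 + g * (156) + f * (150) + r * (158) + e2 * (1761) + e1 * (396))))) + c * (47907 + g * (7122 + g * (139)) + f * (6384 + g * (513 + g * (2)) + f * (118 + g * (2))) + r * (14701 + g * (516) + f * (968 + g * (6) + f * (3)) + r * (277 + f * (2))) + e2 * (74394 + g * (6630 + g * (59)) + f * (6630 + g * (236) + f * (59)) + r * (11419 + g * (158) + f * (314) + r * (73)) + e2 * (40502 + g * (1869 + g * (4)) + f * (1947 + g * (16) + f * (4)) + r * (2472 + g * (8) + f * (16) + r * (4)) + e2 * (8975 + g * (142) + f * (146) + r * (149) + e2 * (648)))) + e1 * (95894 + g * (9352 + g * (97)) + f * (8696 + g * (376) + f * (91)) + r * (14585 + g * (252) + f * (494) + r * (95)) + e2 * (103576 + g * (5294 + g * (14)) + f * (5294 + g * (56) + f * (14)) + r * (6878 + g * (28) + f * (56) + r * (10)) + e2 * (34221 + g * (606) + f * (618) + r * (637) + e2 * (3280))) + e1 * (63022 + g * (3587 + g * (12)) + f * (3415 + g * (48) + f * (12)) + r * (4518 + g * (24) + f * (48) + r * (6)) + e2 * (42262 + g * (870) + f * (870) + r * (917) + e2 * (6261)) + e1 * (16826 + g * (402) + f * (390)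 + r * (423) + e2 * (5188) + e1 * (1561)))) + c * (26597 + g * (2297 + g * (14)) + f * (2109 + g * (56) + f * (14)) + r * (4640 + g * (39) + f * (80) + r * (11)) + e2 * (29216 + g * (1169 + g) + f * (1169 + g * (4) + f) + r * (1642 + g * (2) + f * (4) + r) + e2 * (9404 + g * (102) + f * (102) + r * (107) + e2 * (799))) + e1 * (41020 + g * (1922 + g * (3)) + f * (1840 + g * (12) + f * (3)) + r * (2669 + g * (6) + f * (12) + r) + e2 * (26180 + g * (354) + f * (354) + r * (379) + e2 * (3375)) + e1 * (17316 + g * (300) + f * (294) + r * (326) + e2 * (4740) + e1 * (2117))) + c * (6036 + g * (187) + f * (185) + r * (293) + e2 * (3812 + g * (18) + f * (18) + r * (19) + e2 * (388)) + e1 * (6174 + g * (54) + f * (54) + r * (61) + e2 * (1340) + e1 * (1109)) + c * (448 + e2 * (53) + e1 * (157))))) + b * (30487 + g * (4894 + g * (110)) + f * (4031 + g * (384 + g * (2)) + f * (83 + g * (2))) + r * (8627 + g * (347) + f * (627 + g * (6) + f * (3)) + r * (159 + f * (2))) + e2 * (46987 + g * (4626 + g * (50)) + f * (4305 + g * (194) + f * (47)) + r * (7110 + g * (127) + f * (248) + r * (48)) + e2 * (25479 + g * (1324 + g * (4)) + f * (1324 + g * (16) + f * (4)) + r * (1680 + g * (8) + f * (16) + r * (3)) + e2 * (5641 + g * (104) + f * (106) + r * (108) + e2 * (409)))) + e1 * (56782 + g * (6086 + g * (74)) + f * (5288 + g * (278) + f * (65)) + r * (8693 + g * (182) + f * (348)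 + r * (59)) + e2 * (61909 + g * (3560 + g * (13)) + f * (3392 + g * (52) + f * (13)) + r * (4408 + g * (26) + f * (52) + r * (7)) + e2 * (20794 + g * (438) + f * (438) + r * (455) + e2 * (2059))) + e1 * (36146 + g * (2302 + g * (10)) + f * (2078 + g * (40) + f * (10)) + r * (2766 + g * (20) + f * (40) + r * (4)) + e2 * (24784 + g * (600) + f * (582) + r * (622) + e2 * (3819)) + e1 * (9546 + g * (264) + f * (246) + r * (272) + e2 * (3058) + e1 * (890)))) + c * (37347 + g * (3658 + g * (33)) + f * (3142 + g * (126) + f * (30)) + r * (6223 + g * (86) + f * (170) + r * (22)) + e2 * (40502 + g * (1947 + g * (4)) + f * (1869 + g * (16) + f * (4)) + r * (2609 + g * (8) + f * (16) + r * (2)) + e2 * (13052 + g * (192) + f * (192) + r * (202) + e2 * (1143))) + e1 * (52254 + g * (2862 + g * (8)) + f * (2608 + g * (32) + f * (8)) + r * (3748 + g * (16) + f * (32) + r * (2)) + e2 * (34221 + g * (618) + f * (606) + r * (659) + e2 * (4716)) + e1 * (21424 + g * (468) + f * (444) + r * (502) + e2 * (6261) + e1 * (2645))) + c * (14956 + g * (657 + g) + f * (613 + g * (4) + f) + r * (953 + g * (2) + f * (4)) + e2 * (9404 + g * (102) + f * (102) + r * (111) + e2 * (1071)) + e1 * (13487 + g * (204) + f * (198) + r * (228) + e2 * (3375) + e1 * (2469)) + c * (2077 + g * (18) + f * (18) + r * (21) + e2 * (388) + e1 * (753) + c * (52)))) + b * (15714 + g * (1706 + g * (19)) + f * (1375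 + g * (70) + f * (16)) + r * (2602 + g * (47) + f * (90) + r * (11)) + e2 * (17151 + g * (953 + g * (3)) + f * (871 + g * (12) + f * (3)) + r * (1219 + g * (6) + f * (12) + r) + e2 * (5641 + g * (106) + f * (104) + r * (111) + e2 * (522))) + e1 * (20879 + g * (1302 + g * (5)) + f * (1124 + g * (20) + f * (5)) + r * (1624 + g * (10) + f * (20) + r) + e2 * (14067 + g * (314) + f * (298) + r * (331) + e2 * (2059)) + e1 * (8426 + g * (220) + f * (200) + r * (232) + e2 * (2599) + e1 * (1049))) + c * (13888 + g * (743 + g * (2)) + f * (655 + g * (8) + f * (2)) + r * (1015 + g * (4) + f * (8)) + e2 * (8975 + g * (146) + f * (142) + r * (159) + e2 * (1143)) + e1 * (11867 + g * (242) + f * (226) + r * (267) + e2 * (3280) + e1 * (2204)) + c * (3438 + g * (52) + f * (50) + r * (60) + e2 * (799) + e1 * (1274) + c * (191))) + b * (4404 + g * (273 + g) + f * (227 + g * (4) + f) + r * (355 + g * (2) + f * (4)) + e2 * (2940 + g * (62) + f * (58) + r * (67) + e2 * (409)) + e1 * (3663 + g * (92) + f * (82) + r * (100) + e2 * (1090) + e1 * (688)) + c * (2442 + g * (50) + f * (46) + r * (57) + e2 * (648) + e1 * (919) + c * (262)) + b * (633 + g * (16) + f * (14) + r * (18) + e2 * (184) + e1 * (241) + c * (159) + b * (36)))))) + a * (4464 + g * (698 + g * (14)) + f * (698 + g * (56) + f * (14)) + r * (1834 + g * (92) + f * (184 + g * (4) + f * (2)) + r * (70 + f * (4))) + e2 *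 (10814 + g * (1249 + g * (17)) + f * (1345 + g * (72) + f * (19)) + r * (2989 + g * (100) + f * (206 + g * (2) + f) + r * (75 + f * (2))) + e2 * (10593 + g * (862 + g * (7)) + f * (968 + g * (30) + f * (8)) + r * (1798 + g * (33) + f * (69) + r * (24)) + e2 * (5339 + g * (282 + g) + f * (317 + g * (4) + f) + r * (481 + g * (3) + f * (6) + r * (2)) + e2 * (1446 + g * (42) + f * (45) + r * (54) + e2 * (196 + g * (2) + f * (2) + r * (2) + e2 * (10)))))) + e1 * (13212 + g * (1609 + g * (23)) + f * (1609 + g * (92) + f * (23)) + r * (3313 + g * (114) + f * (228 + g * (2) + f) + r * (79 + f * (2))) + e2 * (25721 + g * (2218 + g * (19)) + f * (2336 + g * (78) + f * (20)) + r * (4094 + g * (79) + f * (161) + r * (52)) + e2 * (19293 + g * (1079 + g * (4)) + f * (1161 + g * (16) + f * (4)) + r * (1705 + g * (12) + f * (24) + r * (7)) + e2 * (6890 + g * (210) + f * (222) + r * (267) + e2 * (1147 + g * (12) + f * (12) + r * (12) + e2 * (68))))) + e1 * (15014 + g * (1368 + g * (12)) + f * (1368 + g * (48) + f * (12)) + r * (2298 + g * (46) + f * (92) + r * (28)) + e2 * (22522 + g * (1334 + g * (5)) + f * (1381 + g * (20) + f * (5)) + r * (1978 + g * (15) + f * (30) + r * (8)) + e2 * (12063 + g * (390) + f * (405) + r * (486) + e2 * (2676 + g * (30) + f * (30) + r * (30) + e2 * (198)))) + e1 * (8550 + g * (537 + g * (2)) + f * (537 + g * (8) + f * (2)) + r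 * (754 + g * (6) + f * (12) + r * (3)) + e2 * (9213 + g * (318) + f * (324) + r * (387) + e2 * (3093 + g * (38) + f * (38) + r * (38) + e2 * (310))) + e1 * (2594 + g * (96) + f * (96) + r * (114) + e2 * (1766 + g * (24) + f * (24) + r * (24) + e2 * (272)) + e1 * (398 + g * (6) + f * (6) + r * (6) + e2 * (126) + e1 * (24)))))) + c * (8416 + g * (985 + g * (13)) + f * (985 + g * (52) + f * (13)) + r * (2769 + g * (92) + f * (182 + g * (2) + f) + r * (71 + f * (2))) + e2 * (16591 + g * (1322 + g * (10)) + f * (1416 + g * (42) + f * (11)) + r * (3196 + g * (56) + f * (114) + r * (42)) + e2 * (12531 + g * (625 + g * (2)) + f * (683 + g * (8) + f * (2)) + r * (1192 + g * (6) + f * (12) + r * (4)) + e2 * (4474 + g * (117) + f * (123) + r * (155) + e2 * (736 + g * (6) + f * (6) + r * (6) + e2 * (42))))) + e1 * (21414 + g * (1818 + g * (15)) + f * (1818 + g * (60) + f * (15)) + r * (3718 + g * (69) + f * (137) + r * (46)) + e2 * (31938 + g * (1707 + g * (6)) + f * (1777 + g * (24) + f * (6)) + r * (2924 + g * (18) + f * (36) + r * (10)) + e2 * (16834 + g * (468) + f * (486) + r * (616) + e2 * (3606 + g * (30) + f * (30) + r * (30) + e2 * (246)))) + e1 * (19394 + g * (1104 + g * (4)) + f * (1104 + g * (16) + f * (4)) + r * (1743 + g * (12) + f * (24) + r * (6)) + e2 * (20437 + g * (609) + f * (621) + r * (785) + e2 * (6572 + g * (60) + f * (60) + r * (60) +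 e2 * (600))) + e1 * (8050 + g * (258) + f * (258) + r * (324) + e2 * (5244 + g * (54) + f * (54) + r * (54) + e2 * (738)) + e1 * (1542 + g * (18) + f * (18) + r * (18) + e2 * (450) + e1 * (108))))) + c * (5884 + g * (460 + g * (3)) + f * (460 + g * (12) + f * (3)) + r * (1392 + g * (23) + f * (45) + r * (18)) + e2 * (8978 + g * (414 + g) + f * (437 + g * (4) + f) + r * (944 + g * (3) + f * (6) + r * (2)) + e2 * (4787 + g * (108) + f * (111) + r * (148) + e2 * (1019 + g * (6) + f * (6) + r * (6) + e2 * (66)))) + e1 * (12544 + g * (638 + g * (2)) + f * (638 + g * (8) + f * (2)) + r * (1222 + g * (6) + f * (12) + r * (3)) + e2 * (13027 + g * (324) + f * (330) + r * (445) + e2 * (4015 + g * (24) + f * (24) + r * (24) + e2 * (324))) + e1 * (8362 + g * (228) + f * (228) + r * (306) + e2 * (5169 + g * (36) + f * (36) + r * (36) + e2 * (636)) + e1 * (2160 + g * (18) + f * (18) + r * (18) + e2 * (558) + e1 * (180)))) + c * (1804 + g * (71) + f * (71) + r * (233) + e2 * (1963 + g * (33) + f * (33) + r * (47) + e2 * (614 + g * (2) + f * (2) + r * (2) + e2 * (46))) + e1 * (3110 + g * (66) + f * (66) + r * (96) + e2 * (1826 + g * (6) + f * (6) + r * (6) + e2 * (182)) + e1 * (1286 + g * (6) + f * (6) + r * (6) + e2 * (270) + e1 * (132))) + c * (204 + e2 * (135 + e2 * (12)) + e1 * (270 + e2 * (36) + e1 * (36)))))) + b * (10814 + g * (1345 +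 g * (19)) + f * (1249 + g * (72) + f * (17)) + r * (3093 + g * (106) + f * (204 + g * (2) + f) + r * (75 + f * (2))) + e2 * (21126 + g * (1816 + g * (15)) + f * (1816 + g * (60) + f * (15)) + r * (3694 + g * (69) + f * (137) + r * (46)) + e2 * (15807 + g * (858 + g * (3)) + f * (893 + g * (12) + f * (3)) + r * (1454 + g * (9) + f * (18) + r * (5)) + e2 * (5580 + g * (159) + f * (165) + r * (206) + e2 * (903 + g * (8) + f * (8) + r * (8) + e2 * (50))))) + e1 * (25721 + g * (2336 + g * (20)) + f * (2218 + g * (78) + f * (19)) + r * (4220 + g * (82) + f * (160) + r * (50)) + e2 * (38396 + g * (2217 + g * (8)) + f * (2217 + g * (32) + f * (8)) + r * (3470 + g * (24) + f * (48) + r * (12)) + e2 * (20290 + g * (618) + f * (630) + r * (787) + e2 * (4370 + g * (42) + f * (42) + r * (42) + e2 * (302)))) + e1 * (22522 + g * (1381 + g * (5)) + f * (1334 + g * (20) + f * (5)) + r * (2027 + g * (15) + f * (30) + r * (7)) + e2 * (23950 + g * (783) + f * (783) + r * (974) + e2 * (7823 + g * (84) + f * (84) + r * (84) + e2 * (738))) + e1 * (9213 + g * (324) + f * (318) + r * (393) + e2 * (6122 + g * (74) + f * (74) + r * (74) + e2 * (896)) + e1 * (1766 + g * (24) + f * (24) + r * (24) + e2 * (536) + e1 * (126))))) + c * (16591 + g * (1416 + g * (11)) + f * (1322 + g * (42) + f * (10)) + r * (3306 + g * (59) + f * (113) + r * (40)) + e2 * (24832 + g * (1285 + g * (4)) +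 f * (1285 + g * (16) + f * (4)) + r * (2428 + g * (12) + f * (24) + r * (6)) + e2 * (12986 + g * (333) + f * (339) + r * (447) + e2 * (2700 + g * (18) + f * (18) + r * (18) + e2 * (168)))) + e1 * (31938 + g * (1777 + g * (6)) + f * (1707 + g * (24) + f * (6)) + r * (3006 + g * (18) + f * (36) + r * (8)) + e2 * (33260 + g * (930) + f * (930) + r * (1228) + e2 * (10356 + g * (78) + f * (78) + r * (78) + e2 * (864))) + e1 * (20437 + g * (621) + f * (609) + r * (799) + e2 * (12926 + g * (114) + f * (114) + r * (114) + e2 * (1686)) + e1 * (5244 + g * (54) + f * (54) + r * (54) + e2 * (1440) + e1 * (450)))) + c * (8978 + g * (437 + g) + f * (414 + g * (4) + f) + r * (977 + g * (3) + f * (6) + r) + e2 * (9342 + g * (207) + f * (207) + r * (290) + e2 * (2800 + g * (12) + f * (12) + r * (12) + e2 * (198))) + e1 * (13027 + g * (330) + f * (324) + r * (455) + e2 * (7786 + g * (42) + f * (42) + r * (42) + e2 * (846)) + e1 * (5169 + g * (36) + f * (36) + r * (36) + e2 * (1212) + e1 * (558))) + c * (1963 + g * (33) + f * (33) + r * (49) + e2 * (1138 + g * (2) + f * (2) + r * (2) + e2 * (92)) + e1 * (1826 + g * (6) + f * (6) + r * (6) + e2 * (320) + e1 * (270)) + c * (135 + e2 * (12) + e1 * (36))))) + b * (10593 + g * (968 + g * (8)) + f * (862 + g * (30) + f * (7)) + r * (1916 + g * (36) + f * (68) + r * (22)) + e2 * (15807 + g * (893 + g * (3)) + f * (858 + g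 * (12) + f * (3)) + r * (1495 + g * (9) + f * (18) + r * (4)) + e2 * (8268 + g * (237) + f * (237) + r * (308) + e2 * (1729 + g * (14) + f * (14) + r * (14) + e2 * (110)))) + e1 * (19293 + g * (1161 + g * (4)) + f * (1079 + g * (16) + f * (4)) + r * (1795 + g * (12) + f * (24) + r * (5)) + e2 * (20290 + g * (630) + f * (618) + r * (801) + e2 * (6446 + g * (60) + f * (60) + r * (60) + e2 * (566))) + e1 * (12063 + g * (405) + f * (390) + r * (502) + e2 * (7823 + g * (84) + f * (84) + r * (84) + e2 * (1080)) + e1 * (3093 + g * (38) + f * (38) + r * (38) + e2 * (896) + e1 * (272)))) + c * (12531 + g * (683 + g * (2)) + f * (625 + g * (8) + f * (2)) + r * (1266 + g * (6) + f * (12) + r * (2)) + e2 * (12986 + g * (339) + f * (333) + r * (457) + e2 * (3928 + g * (24) + f * (24) + r * (24) + e2 * (294))) + e1 * (16834 + g * (486) + f * (468) + r * (640) + e2 * (10356 + g * (78) + f * (78) + r * (78) + e2 * (1236)) + e1 * (6572 + g * (60) + f * (60) + r * (60) + e2 * (1686) + e1 * (738))) + c * (4787 + g * (111) + f * (108) + r * (156) + e2 * (2800 + g * (12) + f * (12) + r * (12) + e2 * (264)) + e1 * (4015 + g * (24) + f * (24) + r * (24) + e2 * (846) + e1 * (636)) + c * (614 + g * (2) + f * (2) + r * (2) + e2 * (92) + e1 * (182) + c * (12)))) + b * (5339 + g * (317 + g) + f * (282 + g * (4) + f) + r * (522 + g * (3) + f * (6) + r) + e2 * (5580 + g * (165)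 + f * (159) + r * (214) + e2 * (1729 + g * (14) + f * (14) + r * (14) + e2 * (140))) + e1 * (6890 + g * (222) + f * (210) + r * (281) + e2 * (4370 + g * (42) + f * (42) + r * (42) + e2 * (566)) + e1 * (2676 + g * (30) + f * (30) + r * (30) + e2 * (738) + e1 * (310))) + c * (4474 + g * (123) + f * (117) + r * (165) + e2 * (2700 + g * (18) + f * (18) + r * (18) + e2 * (294)) + e1 * (3606 + g * (30) + f * (30) + r * (30) + e2 * (864) + e1 * (600)) + c * (1019 + g * (6) + f * (6) + r * (6) + e2 * (198) + e1 * (324) + c * (46))) + b * (1446 + g * (45) + f * (42) + r * (58) + e2 * (903 + g * (8) + f * (8) + r * (8) + e2 * (110)) + e1 * (1147 + g * (12) + f * (12) + r * (12) + e2 * (302) + e1 * (198)) + c * (736 + g * (6) + f * (6) + r * (6) + e2 * (168) + e1 * (246) + c * (66)) + b * (196 + g * (2) + f * (2) + r * (2) + e2 * (50) + e1 * (68) + c * (42) + b * (10)))))) + a * (756 + g * (52) + f * (52) + r * (204 + g * (4) + f * (8) + r * (4)) + e2 * (1800 + g * (92) + f * (96) + r * (324 + g * (4) + f * (8) + r * (4)) + e2 * (1725 + g * (61) + f * (65) + r * (183 + g + f * (2) + r) + e2 * (841 + g * (18) + f * (19) + r * (42) + e2 * (215 + g * (2) + f * (2) + r * (3) + e2 * (26 + e2))))) + e1 * (2196 + g * (116) + f * (116) + r * (348 + g * (4) + f * (8) + r * (4)) + e2 * (4194 + g * (154) + f * (158) + r * (402 + g * (2) + f * (4) + r * (2)) +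 e2 * (3054 + g * (68) + f * (70) + r * (144) + e2 * (1035 + g * (10) + f * (10) + r * (15) + e2 * (155 + e2 * (7))))) + e1 * (2469 + g * (93) + f * (93) + r * (219 + g + f * (2) + r) + e2 * (3597 + g * (82) + f * (83) + r * (162) + e2 * (1831 + g * (18) + f * (18) + r * (27) + e2 * (367 + e2 * (21)))) + e1 * (1384 + g * (32) + f * (32) + r * (60) + e2 * (1417 + g * (14) + f * (14) + r * (21) + e2 * (431 + e2 * (34))) + e1 * (406 + g * (4) + f * (4) + r * (6) + e2 * (251 + e2 * (31)) + e1 * (58 + e2 * (15) + e1 * (3)))))) + c * (1404 + g * (72) + f * (72) + r * (304 + g * (4) + f * (8) + r * (4)) + e2 * (2694 + g * (94) + f * (98) + r * (334 + g * (2) + f * (4) + r * (2)) + e2 * (1964 + g * (41) + f * (43) + r * (109) + e2 * (662 + g * (6) + f * (6) + r * (9) + e2 * (97 + e2 * (4))))) + e1 * (3450 + g * (126) + f * (126) + r * (370 + g * (2) + f * (4) + r * (2)) + e2 * (4994 + g * (110) + f * (112) + r * (254) + e2 * (2502 + g * (24) + f * (24) + r * (36) + e2 * (482 + e2 * (24)))) + e1 * (3042 + g * (69) + f * (69) + r * (145) + e2 * (3050 + g * (30) + f * (30) + r * (45) + e2 * (885 + e2 * (60))) + e1 * (1210 + g * (12) + f * (12) + r * (18) + e2 * (712 + e2 * (76)) + e1 * (212 + e2 * (48) + e1 * (12))))) + c * (969 + g * (33) + f * (33) + r * (151 + g + f * (2) + r) + e2 * (1417 + g * (28) + f * (29) +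 r * (92) + e2 * (712 + g * (6) + f * (6) + r * (9) + e2 * (135 + e2 * (6)))) + e1 * (1952 + g * (42) + f * (42) + r * (110) + e2 * (1931 + g * (18) + f * (18) + r * (27) + e2 * (537 + e2 * (30))) + e1 * (1235 + g * (12) + f * (12) + r * (18) + e2 * (690 + e2 * (60)) + e1 * (288 + e2 * (54) + e1 * (18)))) + c * (294 + g * (5) + f * (5) + r * (25) + e2 * (298 + g * (2) + f * (2) + r * (3) + e2 * (83 + e2 * (4))) + e1 * (464 + g * (4) + f * (4) + r * (6) + e2 * (248 + e2 * (16)) + e1 * (172 + e2 * (24) + e1 * (12))) + c * (33 + e2 * (19 + e2) + e1 * (38 + e2 * (3) + e1 * (3)))))) + b * (1800 + g * (96) + f * (92) + r * (328 + g * (4) + f * (8) + r * (4)) + e2 * (3438 + g * (126) + f * (126) + r * (370 + g * (2) + f * (4) + r * (2)) + e2 * (2495 + g * (55) + f * (56) + r * (127) + e2 * (837 + g * (8) + f * (8) + r * (12) + e2 * (122 + e2 * (5))))) + e1 * (4194 + g * (158) + f * (154) + r * (406 + g * (2) + f * (4) + r * (2)) + e2 * (6080 + g * (138) + f * (138) + r * (290) + e2 * (3059 + g * (30) + f * (30) + r * (45) + e2 * (596 + e2 * (31)))) + e1 * (3597 + g * (83) + f * (82) + r * (163) + e2 * (3639 + g * (36) + f * (36) + r * (54) + e2 * (1077 + e2 * (78))) + e1 * (1417 + g * (14) + f * (14) + r * (21) + e2 * (854 + e2 * (98)) + e1 * (251 + e2 * (61) + e1 * (15))))) + c * (2694 +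 g * (98) + f * (94) + r * (338 + g * (2) + f * (4) + r * (2)) + e2 * (3900 + g * (84) + f * (84) + r * (220) + e2 * (1940 + g * (18) + f * (18) + r * (27) + e2 * (364 + e2 * (16)))) + e1 * (4994 + g * (112) + f * (110) + r * (256) + e2 * (4958 + g * (48) + f * (48) + r * (72) + e2 * (1398 + e2 * (84))) + e1 * (3050 + g * (30) + f * (30) + r * (45) + e2 * (1746 + e2 * (168)) + e1 * (712 + e2 * (148) + e1 * (48)))) + c * (1417 + g * (29) + f * (28) + r * (93) + e2 * (1401 + g * (12) + f * (12) + r * (18) + e2 * (381 + e2 * (18))) + e1 * (1931 + g * (18) + f * (18) + r * (27) + e2 * (1050 + e2 * (78)) + e1 * (690 + e2 * (114) + e1 * (54))) + c * (298 + g * (2) + f * (2) + r * (3) + e2 * (158 + e2 * (8)) + e1 * (248 + e2 * (28) + e1 * (24)) + c * (19 + e2 + e1 * (3))))) + b * (1725 + g * (65) + f * (61) + r * (187 + g + f * (2) + r) + e2 * (2495 + g * (56) + f * (55) + r * (128) + e2 * (1244 + g * (12) + f * (12) + r * (18) + e2 * (236 + e2 * (11)))) + e1 * (3054 + g * (70) + f * (68) + r * (146) + e2 * (3059 + g * (30) + f * (30) + r * (45) + e2 * (882 + e2 * (58))) + e1 * (1831 + g * (18) + f * (18) + r * (27) + e2 * (1077 + e2 * (114)) + e1 * (431 + e2 * (98) + e1 * (31)))) + c * (1964 + g * (43) + f * (41) + r * (111) + e2 * (1940 + g * (18) + f * (18) + r * (27) + e2 * (534 + e2 * (28))) + e1 *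 (2502 + g * (24) + f * (24) + r * (36) + e2 * (1398 + e2 * (120)) + e1 * (885 + e2 * (168) + e1 * (76))) + c * (712 + g * (6) + f * (6) + r * (9) + e2 * (381 + e2 * (24)) + e1 * (537 + e2 * (78) + e1 * (60)) + c * (83 + e2 * (8) + e1 * (16) + c))) + b * (841 + g * (19) + f * (18) + r * (43) + e2 * (837 + g * (8) + f * (8) + r * (12) + e2 * (236 + e2 * (14))) + e1 * (1035 + g * (10) + f * (10) + r * (15) + e2 * (596 + e2 * (58)) + e1 * (367 + e2 * (78) + e1 * (34))) + c * (662 + g * (6) + f * (6) + r * (9) + e2 * (364 + e2 * (28)) + e1 * (482 + e2 * (84) + e1 * (60)) + c * (135 + e2 * (18) + e1 * (30) + c * (4))) + b * (215 + g * (2) + f * (2) + r * (3) + e2 * (122 + e2 * (11)) + e1 * (155 + e2 * (31) + e1 * (21)) + c * (97 + e2 * (16) + e1 * (24) + c * (6)) + b * (26 + e2 * (5) + e1 * (7) + c * (4) + b))))) + a * (48 + r * (8) + e2 * (112 + r * (12) + e2 * (104 + r * (6) + e2 * (48 + r + e2 * (11 + e2)))) + e1 * (136 + r * (12) + e2 * (252 + r * (12) + e2 * (174 + r * (3) + e2 * (53 + e2 * (6)))) + e1 * (148 + r * (6) + e2 * (204 + r * (3) + e2 * (93 + e2 * (14))) + e1 * (78 + r + e2 * (71 + e2 * (16)) + e1 * (20 + e2 * (9) + e1 * (2))))) + c * (88 + r * (12) + e2 * (164 + r * (12) + e2 * (114 + r * (3) + e2 * (35 + e2 * (4)))) + e1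 * (208 + r * (12) + e2 * (288 + r * (6) + e2 * (132 + e2 * (20))) + e1 * (174 + r * (3) + e2 * (159 + e2 * (36)) + e1 * (62 + e2 * (28) + e1 * (8)))) + c * (60 + r * (6) + e2 * (84 + r * (3) + e2 * (39 + e2 * (6))) + e1 * (114 + r * (3) + e2 * (105 + e2 * (24)) + e1 * (66 + e2 * (30) + e1 * (12))) + c * (18 + r + e2 * (17 + e2 * (4)) + e1 * (26 + e2 * (12) + e1 * (8)) + c * (2 + e2 + e1 * (2))))) + b * (112 + r * (12) + e2 * (208 + r * (12) + e2 * (144 + r * (3) + e2 * (44 + e2 * (5)))) + e1 * (252 + r * (12) + e2 * (348 + r * (6) + e2 * (159 + e2 * (24))) + e1 * (204 + r * (3) + e2 * (186 + e2 * (42)) + e1 * (71 + e2 * (32) + e1 * (9)))) + c * (164 + r * (12) + e2 * (228 + r * (6) + e2 * (105 + e2 * (16))) + e1 * (288 + r * (6) + e2 * (264 + e2 * (60)) + e1 * (159 + e2 * (72) + e1 * (28))) + c * (84 + r * (3) + e2 * (78 + e2 * (18)) + e1 * (105 + e2 * (48) + e1 * (30)) + c * (17 + e2 * (8) + e1 * (12) + c))) + b * (104 + r * (6) + e2 * (144 + r * (3) + e2 * (66 + e2 * (10))) + e1 * (174 + r * (3) + e2 * (159 + e2 * (36)) + e1 * (93 + e2 * (42) + e1 * (16))) + c * (114 + r * (3) + e2 * (105 + e2 * (24)) + e1 * (132 + e2 * (60) + e1 * (36)) + c * (39 + e2 * (18) + e1 * (24) + c * (4))) + b * (48 + r + e2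 * (44 + e2 * (10)) + e1 * (53 + e2 * (24) + e1 * (14)) + c * (35 + e2 * (16) + e1 * (20) + c * (6)) + b * (11 + e2 * (5) + e1 * (6) + c * (4) + b))))))))))%N); ring.
Qed.
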